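(* For any $a,b\ge0$, $$\lim_{n\to\infty}\Biggl(\sum_{i=0}^{\lfloor n/2\rfloor}\binom nia^ib^{n-i}\Biggr)^{1/n}=\begin{cases}a+b&\text{if }a\le b,\\ 2\sqrt{ab}&\text{if }a\ge b.\end{cases}$$
   Context: The convention $0^0=1$ is used in the terms $a^ib^{n-i}$. *)

(* Defs.v *)
From Stdlib Require Import Reals.
From Coquelicot Require Import Coquelicot.
Open Scope R_scope.

(* Nonnegative real n-th root: x^(1/n) for x > 0, and 0 for x <= 0
   (0^(1/n) = 0 for n >= 1; the value at n = 0 is irrelevant for a limit). *)
Definition nthroot (x : R) (n : nat) : R :=
  if Rlt_dec 0 x then Rpower x (/ INR n) else 0.

(* S_n(a,b) = sum_{i=0}^{floor(n/2)} C(n,i) a^i b^(n-i), with 0^0 = 1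
   (Stdlib's pow satisfies pow 0 0 = 1). *)
Definition half_binom_sum (a b : R) (n : nat) : R :=
  sum_n (fun i => Binomial.C n i * a ^ i * b ^ (n - i)) (Nat.div n 2).

(* Main.v *)
Require Import Defs.
From Stdlib Require Import Reals.
From Coquelicot Require Import Coquelicot.
Open Scope R_scope.
From Stdlib Require Import Lra Lia.

Lemma lim_invn : is_lim_seq (fun n => / INR n) 0.
Proof.
  replace (Finite 0) with (Rbar_inv p_infty) by reflexivity.
  apply is_lim_seq_inv. apply is_lim_seq_INR. discriminate.
Qed.

Lemma lim_lnS_S : is_lim_seq (fun n => ln (INR n + 1) / (INR n + 1)) 0.
Proof.
  apply (is_lim_comp_seq (fun y => ln y / y) (fun n => INR n + 1) p_infty 0).
  - apply is_lim_div_ln_p.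
  - exists 0%nat. intros; discriminate.
  - apply is_lim_seq_ext with (fun n => INR (S n)). intros; now rewrite S_INR.
    apply (is_lim_seq_incr_1 INR p_infty).
    apply is_lim_seq_INR.
Qed.

Lemma lim_lnS_n : is_lim_seq (fun n => ln (INR n + 1) / INR n) 0.
Proof.
  apply is_lim_seq_le_le_loc with (fun _ => 0) (fun n => 2 * (ln (INR n + 1) / (INR n + 1))).
  - exists 1%nat. intros n Hn.
    assert (H1 : 1 <= INR n) by (apply (le_INR 1); lia).
    assert (H0 : 0 <= ln (INR n + 1)).
    { rewrite <- ln_1. apply ln_le; lra. }
    split.
    + apply Rdiv_le_0_compat; lra.
    + set (l := ln (INR n + 1)) in *.
      assert (E : 2 * (l / (INR n + 1)) - l / INR n = l * (INR n - 1) / (INR n * (INR n + 1))) by (field; lra).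
      assert (0 <= l * (INR n - 1) / (INR n * (INR n + 1))).
      { apply Rdiv_le_0_compat. apply Rmult_le_pos; lra. apply Rmult_lt_0_compat; lra. }
      lra.
  - apply is_lim_seq_const.
  - replace (Finite 0) with (Rbar_mult 2 0) by (simpl; f_equal; ring).
    apply is_lim_seq_scal_l. apply lim_lnS_S.
Qed.

Lemma key (x : nat -> R) (L c : R) : 0 < L -> 0 < c ->
  (forall n, (1 <= n)%nat -> c * L ^ n / (INR n + 1) <= x n <= (INR n + 1) * L ^ n) ->
  is_lim_seq (fun n => nthroot (x n) n) L.
Proof.
  intros HL Hc H.
  assert (Hy : is_lim_seq (fun n => ln (x n) / INR n) (ln L)).
  { apply is_lim_seq_le_le_loc with
      (fun n => ln L + ln c * / INR n - ln (INR n + 1) / INR n)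
      (fun n => ln L + ln (INR n + 1) / INR n).
    - exists 1%nat. intros n Hn. destruct (H n Hn) as [Hl Hu].
      assert (H1 : 1 <= INR n) by (apply (le_INR 1); lia).
      assert (HLn : 0 < L ^ n) by (apply pow_lt; lra).
      assert (Hlow : 0 < c * L ^ n / (INR n + 1)).
      { apply Rdiv_lt_0_compat; [apply Rmult_lt_0_compat|]; lra. }
      assert (E1 : ln (c * L ^ n / (INR n + 1)) = ln c + INR n * ln L - ln (INR n + 1)).
      { rewrite ln_div, ln_mult, ln_pow; try lra; try (apply Rmult_lt_0_compat; lra); auto. }
      assert (E2 : ln ((INR n + 1) * L ^ n) = ln (INR n + 1) + INR n * ln L).
      { rewrite ln_mult, ln_pow; try lra; auto. }
      assert (A1 : ln (c * L ^ n / (INR n + 1)) <= ln (x n)) by (apply ln_le; lra).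
      assert (A2 : ln (x n) <= ln ((INR n + 1) * L ^ n)) by (apply ln_le; lra).
      rewrite E1 in A1. rewrite E2 in A2.
      split.
      + apply (Rmult_le_reg_l (INR n)); [lra|].
        replace (INR n * (ln L + ln c * / INR n - ln (INR n + 1) / INR n))
          with (ln c + INR n * ln L - ln (INR n + 1)) by (field; lra).
        replace (INR n * (ln (x n) / INR n)) with (ln (x n)) by (field; lra). lra.
      + apply (Rmult_le_reg_l (INR n)); [lra|].
        replace (INR n * (ln L + ln (INR n + 1) / INR n))
          with (ln (INR n + 1) + INR n * ln L) by (field; lra).
        replace (INR n * (ln (x n) / INR n)) with (ln (x n)) by (field; lra). lra.
    - assert (HH : is_lim_seq (fun n => ln L + ln c * / INR n - ln (INR n + 1) / INR n) (ln L + ln c * 0 - 0)).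
      { apply is_lim_seq_minus'. apply is_lim_seq_plus'. apply is_lim_seq_const.
        apply is_lim_seq_mult'. apply is_lim_seq_const. apply lim_invn. apply lim_lnS_n. }
      replace (ln L + ln c * 0 - 0) with (ln L) in HH by ring. exact HH.
    - assert (HH : is_lim_seq (fun n => ln L + ln (INR n + 1) / INR n) (ln L + 0)).
      { apply is_lim_seq_plus'. apply is_lim_seq_const. apply lim_lnS_n. }
      replace (ln L + 0) with (ln L) in HH by ring. exact HH. }
  rewrite <- (exp_ln L) by lra.
  apply is_lim_seq_ext_loc with (fun n => exp (ln (x n) / INR n)).
  - exists 1%nat. intros n Hn. destruct (H n Hn) as [Hl Hu].
    assert (H1 : 1 <= INR n) by (apply (le_INR 1); lia).
    assert (HLn : 0 < L ^ n) by (apply pow_lt; lra).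
    assert (Hlow : 0 < c * L ^ n / (INR n + 1)).
    { apply Rdiv_lt_0_compat; [apply Rmult_lt_0_compat|]; lra. }
    unfold nthroot. destruct (Rlt_dec 0 (x n)); [|lra].
    unfold Rpower. f_equal. unfold Rdiv. ring.
  - apply (is_lim_seq_continuous exp). apply derivable_continuous_pt, derivable_pt_exp.
    exact Hy.
Qed.

Lemma half_bounds n : (2 * (n / 2) <= n <= 2 * (n / 2) + 1)%nat.
Proof.
  pose proof (Nat.div_mod n 2 ltac:(lia)). pose proof (Nat.mod_upper_bound n 2 ltac:(lia)). lia.
Qed.

Lemma C_pos n i : 0 < Binomial.C n i.
Proof.
  unfold Binomial.C. apply Rdiv_lt_0_compat. apply INR_fact_lt_0.
  apply Rmult_lt_0_compat; apply INR_fact_lt_0.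
Qed.

Lemma C_le_2pow n : forall i, (i <= n)%nat -> Binomial.C n i <= 2 ^ n.
Proof.
  induction n as [|n IH]; intros i Hi.
  - replace i with 0%nat by lia. rewrite C_n_0. simpl; lra.
  - destruct i as [|k].
    + rewrite C_n_0. apply pow_R1_Rle. lra.
    + destruct (Nat.eq_dec k n) as [->|Hk].
      * rewrite C_n_n. apply pow_R1_Rle. lra.
      * rewrite <- pascal by lia. simpl.
        pose proof (IH k ltac:(lia)). pose proof (IH (S k) ltac:(lia)). lra.
Qed.

Lemma sum_trunc (f : nat -> R) m n : (m <= n)%nat ->
  sum_f_R0 (fun i => if Nat.leb i m then f i else 0) n = sum_f_R0 f m.
Proof.
  induction n as [|n IH]; intros H.
  - replace m with 0%nat by lia. simpl. reflexivity.
  - destruct (Nat.eq_dec m (S n)) as [->|Hm].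
    + apply sum_eq. intros i Hi. destruct (Nat.leb_spec i (S n)); [reflexivity|lia].
    + rewrite tech5, IH by lia. destruct (Nat.leb_spec (S n) m); [lia|]. ring.
Qed.

Lemma term_le_sum (f : nat -> R) m : (forall i, 0 <= f i) -> f m <= sum_f_R0 f m.
Proof.
  intros H. destruct m as [|m]. simpl; lra.
  rewrite tech5. pose proof (cond_pos_sum f m H). lra.
Qed.

Definition T (a b : R) n i := Binomial.C n i * a ^ i * b ^ (n - i).

Lemma hbs_eq a b n : half_binom_sum a b n = sum_f_R0 (T a b n) (n / 2).
Proof. unfold half_binom_sum. rewrite sum_n_Reals. reflexivity. Qed.

Lemma T_nonneg a b n i : 0 <= a -> 0 <= b -> 0 <= T a b n i.
Proof.
  intros. unfold T. apply Rmult_le_pos. apply Rmult_le_pos.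
  left; apply C_pos. apply pow_le; auto. apply pow_le; auto.
Qed.

Lemma binom_T a b n : (a + b) ^ n = sum_f_R0 (T a b n) n.
Proof. rewrite binomial. reflexivity. Qed.

Lemma case_le_upper a b n : 0 <= a -> 0 <= b ->
  half_binom_sum a b n <= (a + b) ^ n.
Proof.
  intros ha hb. rewrite hbs_eq, binom_T.
  pose proof (half_bounds n).
  rewrite <- (sum_trunc (T a b n) (n/2) n) by lia.
  apply sum_Rle. intros i _. destruct (Nat.leb i (n/2)). lra. apply T_nonneg; auto.
Qed.

Lemma pow_swap a b j d : 0 <= a <= b ->
  a ^ (j + d) * b ^ j <= a ^ j * b ^ (j + d).
Proof.
  intros H. rewrite !pow_add.
  replace (a ^ j * a ^ d * b ^ j) with ((a ^ j * b ^ j) * a ^ d) by ring.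
  replace (a ^ j * (b ^ j * b ^ d)) with ((a ^ j * b ^ j) * b ^ d) by ring.
  apply Rmult_le_compat_l. apply Rmult_le_pos; apply pow_le; lra.
  apply pow_incr. lra.
Qed.

Lemma case_le_lower a b n : 0 <= a <= b ->
  (a + b) ^ n <= 2 * half_binom_sum a b n.
Proof.
  intros hab. rewrite hbs_eq, binom_T.
  pose proof (half_bounds n) as Hm.
  set (m := (n / 2)%nat) in *.
  set (A := fun i => if Nat.leb i m then T a b n i else 0).
  assert (HA : sum_f_R0 A n = sum_f_R0 (T a b n) m) by (apply sum_trunc; lia).
  rewrite <- HA.
  replace (2 * sum_f_R0 A n) with (sum_f_R0 (fun i => A i + A (n - i)%nat) n).
  2:{ rewrite sum_plus, (sum_f_R0_skip A n). ring. }
  apply sum_Rle. intros i Hi. unfold A.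
  assert (T0 : forall j, 0 <= T a b n j) by (intros; apply T_nonneg; lra).
  destruct (Nat.leb_spec i m).
  - destruct (Nat.leb (n - i) m); pose proof (T0 (n - i)%nat); lra.
  - destruct (Nat.leb_spec (n - i) m); [|lia].
    enough (T a b n i <= T a b n (n - i)) by lra.
    unfold T. rewrite <- (pascal_step1 n i) by lia.
    replace (n - (n - i))%nat with i by lia.
    rewrite !Rmult_assoc. apply Rmult_le_compat_l. left; apply C_pos.
    assert (Ei : i = ((n - i) + (2 * i - n))%nat) by lia.
    replace (a ^ i) with (a ^ ((n - i) + (2 * i - n))) by (f_equal; lia).
    replace (b ^ i) with (b ^ ((n - i) + (2 * i - n))) by (f_equal; lia).
    apply pow_swap. lra.
Qed.

Lemma pow2s_even s a b m : s * s = a * b -> (2 * s) ^ (2 * m) = 4 ^ m * a ^ m * b ^ m.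
Proof.
  intros H. rewrite pow_mult. replace ((2 * s) ^ 2) with (4 * (a * b)) by (simpl; nra).
  rewrite !Rpow_mult_distr. ring.
Qed.

Lemma case_gt_upper a b n : 0 < b < a ->
  half_binom_sum a b n <= (INR n + 1) * (2 * sqrt (a * b)) ^ n.
Proof.
  intros hab. set (s := sqrt (a * b)).
  assert (Hss : s * s = a * b) by (apply sqrt_sqrt; nra).
  assert (Hs0 : 0 <= s) by apply sqrt_pos.
  assert (Hbs : b <= s).
  { destruct (Rle_lt_dec b s); auto. nra. }
  rewrite hbs_eq. pose proof (half_bounds n) as Hm. set (m := (n / 2)%nat) in *.
  apply Rle_trans with (sum_f_R0 (fun _ => 2 ^ n * s ^ n) m).
  - apply sum_Rle. intros i Hi. unfold T.
    rewrite Rmult_assoc. apply Rmult_le_compat.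
    + left; apply C_pos.
    + apply Rmult_le_pos; apply pow_le; lra.
    + apply C_le_2pow; lia.
    + set (d := (n - 2 * i)%nat).
      replace (n - i)%nat with (i + d)%nat by lia.
      replace (s ^ n) with (s ^ (i + i + d)) by (f_equal; lia).
      rewrite !pow_add. replace (s ^ i * s ^ i) with ((s * s) ^ i) by (rewrite Rpow_mult_distr; ring). rewrite Hss, Rpow_mult_distr.
      replace (a ^ i * (b ^ i * b ^ d)) with ((a ^ i * b ^ i) * b ^ d) by ring.
      apply Rmult_le_compat_l. apply Rmult_le_pos; apply pow_le; lra.
      apply pow_incr; lra.
  - rewrite sum_cte, Rpow_mult_distr, S_INR.
    assert (INR m <= INR n) by (apply le_INR; lia).
    assert (0 <= 2 ^ n * s ^ n) by (apply Rmult_le_pos; apply pow_le; lra).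
    nra.
Qed.

Lemma C_central m : 4 ^ m / (2 * INR m + 1) <= Binomial.C (2 * m) m.
Proof.
  assert (H : 4 ^ m <= Binomial.C (2 * m) m * (2 * INR m + 1)).
  { replace (4 ^ m) with ((1 + 1) ^ (2 * m)) by (rewrite pow_mult; f_equal; ring).
    rewrite binomial.
    apply Rle_trans with (sum_f_R0 (fun _ => Binomial.C (2 * m) m) (2 * m)).
    - apply sum_Rle. intros i Hi. rewrite !pow1, !Rmult_1_r. apply C_maj. lia.
    - rewrite sum_cte, S_INR, mult_INR. simpl. lra. }
  assert (0 < 2 * INR m + 1) by (pose proof (pos_INR m); lra).
  apply (Rmult_le_reg_r (2 * INR m + 1)); auto.
  unfold Rdiv. rewrite Rmult_assoc, Rinv_l by lra. lra.
Qed.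

Lemma case_gt_lower a b n : 0 < b < a ->
  (b / (2 * a)) * (2 * sqrt (a * b)) ^ n / (INR n + 1) <= half_binom_sum a b n.
Proof.
  intros hab. set (s := sqrt (a * b)).
  assert (Hss : s * s = a * b) by (apply sqrt_sqrt; nra).
  assert (Hs0 : 0 <= s) by apply sqrt_pos.
  assert (Hsa : s <= a).
  { destruct (Rle_lt_dec s a); auto. nra. }
  rewrite hbs_eq. pose proof (half_bounds n) as Hm. set (m := (n / 2)%nat) in *.
  eapply Rle_trans; [|apply term_le_sum; intros; apply T_nonneg; lra].
  unfold T.
  set (P := 4 ^ m * a ^ m * b ^ m).
  assert (HP : 0 <= P) by (unfold P; repeat apply Rmult_le_pos; apply pow_le; lra).
  pose proof (C_central m) as Hc.
  assert (Hm0 : 0 < 2 * INR m + 1) by (pose proof (pos_INR m); lra).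
  assert (Hc0 : 0 <= 4 ^ m / (2 * INR m + 1)) by (apply Rdiv_le_0_compat; [apply pow_le|]; lra).
  assert (Hcb : 0 < b / (2 * a)) by (apply Rdiv_lt_0_compat; lra).
  assert (Hcb1 : b / (2 * a) <= 1) by (apply (Rmult_le_reg_r (2 * a)); [lra|]; field_simplify; lra).
  destruct (Nat.eq_dec n (2 * m)) as [En|En].
  - rewrite En, pow2s_even with (a := a) (b := b) by auto.
    replace (2 * m - m)%nat with m by lia.
    rewrite mult_INR. replace (INR 2) with 2 by (simpl; ring).
    assert (Q : 0 <= a ^ m * b ^ m) by (apply Rmult_le_pos; apply pow_le; lra).
    apply Rle_trans with (4 ^ m / (2 * INR m + 1) * (a ^ m * b ^ m)).
    + replace (b / (2 * a) * (4 ^ m * a ^ m * b ^ m) / (2 * INR m + 1))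
        with (b / (2 * a) * (4 ^ m / (2 * INR m + 1) * (a ^ m * b ^ m))) by (field; lra).
      rewrite <- (Rmult_1_l (4 ^ m / (2 * INR m + 1) * (a ^ m * b ^ m))) at 2.
      apply Rmult_le_compat_r; [apply Rmult_le_pos|]; lra.
    + rewrite Rmult_assoc. apply Rmult_le_compat_r; lra.
  - assert (En' : n = S (2 * m)) by lia.
    assert (HC : Binomial.C (2 * m) m <= Binomial.C n m).
    { rewrite En', pascal_step2 by lia.
      rewrite <- (Rmult_1_l (Binomial.C (2 * m) m)) at 1.
      apply Rmult_le_compat_r. left; apply C_pos.
      replace (S (2 * m) - m)%nat with (S m) by lia.
      rewrite !S_INR, mult_INR. simpl INR.
      pose proof (pos_INR m).
      apply (Rmult_le_reg_r (INR m + 1)); [lra|]. field_simplify; lra. }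
    assert (E1 : (2 * s) ^ n = P * (2 * s)).
    { rewrite En'. replace (S (2 * m)) with (2 * m + 1)%nat by lia.
      rewrite pow_add, (pow2s_even s a b m Hss). unfold P. ring. }
    assert (E2 : b ^ (n - m) = b ^ m * b).
    { replace (n - m)%nat with (S m) by lia. simpl. ring. }
    assert (E3 : INR n = 2 * INR m + 1).
    { rewrite En', S_INR, mult_INR. simpl. ring. }
    rewrite E1, E2, E3.
    assert (Q : 0 <= a ^ m * b ^ m) by (apply Rmult_le_pos; apply pow_le; lra).
    apply Rle_trans with (P * b / (2 * INR m + 1)).
    + apply Rle_trans with (P * b / (2 * INR m + 1 + 1)).
      * replace (b / (2 * a) * (P * (2 * s)) / (2 * INR m + 1 + 1))
          with (P * ((s / a) * b) / (2 * INR m + 1 + 1)) by (field; lra).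
        unfold Rdiv. apply Rmult_le_compat_r. left; apply Rinv_0_lt_compat; lra.
        apply Rmult_le_compat_l; auto.
        rewrite <- (Rmult_1_l b) at 2. apply Rmult_le_compat_r; [lra|].
        apply (Rmult_le_reg_r a); [lra|]. field_simplify; lra.
      * unfold Rdiv. apply Rmult_le_compat_l. apply Rmult_le_pos; lra.
        apply Rinv_le_contravar; lra.
    + unfold P.
      replace (4 ^ m * a ^ m * b ^ m * b / (2 * INR m + 1)) with (4 ^ m / (2 * INR m + 1) * (a ^ m * (b ^ m * b))) by (field; lra).
      rewrite !Rmult_assoc. apply Rmult_le_compat_r.
      * apply Rmult_le_pos; [apply pow_le; lra|]. apply Rmult_le_pos; [apply pow_le|]; lra.
      * lra.
Qed.

Theorem lemmaA5 (a b : R) (ha : 0 <= a) (hb : 0 <= b) :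
  is_lim_seq (fun n : nat => nthroot (half_binom_sum a b n) n)
    (Finite (if Rle_dec a b then a + b else 2 * sqrt (a * b))).
Proof.
  destruct (Rle_lt_dec b 0) as [Hb0|Hb0].
  - assert (b = 0) by lra. subst b.
    assert (Hv : (if Rle_dec a 0 then a + 0 else 2 * sqrt (a * 0)) = 0).
    { destruct (Rle_dec a 0). lra. rewrite Rmult_0_r, sqrt_0. ring. }
    rewrite Hv.
    apply is_lim_seq_ext_loc with (fun _ => 0); [|apply is_lim_seq_const].
    exists 1%nat. intros n Hn.
    assert (Hz : half_binom_sum a 0 n = 0).
    { rewrite hbs_eq. pose proof (half_bounds n).
      rewrite (sum_eq _ (fun _ => 0)). rewrite sum_cte. ring.
      intros i Hi. unfold T. rewrite pow_i by lia. ring. }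
    rewrite Hz. unfold nthroot. destruct (Rlt_dec 0 0); lra.
  - destruct (Rle_dec a b) as [Hab|Hab].
    + apply key with (c := 1); try lra.
      intros n Hn.
      assert (H1 : 1 <= INR n) by (apply (le_INR 1); lia).
      pose proof (case_le_upper a b n ha hb).
      pose proof (case_le_lower a b n ltac:(lra)).
      assert (0 <= (a + b) ^ n) by (apply pow_le; lra).
      split.
      * apply (Rmult_le_reg_r (INR n + 1)); [lra|].
        replace (1 * (a + b) ^ n / (INR n + 1) * (INR n + 1)) with ((a + b) ^ n) by (field; lra).
        assert (0 <= half_binom_sum a b n) by lra. nra.
      * nra.
    + apply key with (c := b / (2 * a)).
      * assert (0 < sqrt (a * b)) by (apply sqrt_lt_R0; nra). lra.
      * apply Rdiv_lt_0_compat; lra.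
      * intros n Hn. split.
        -- apply case_gt_lower; lra.
        -- apply case_gt_upper; lra.
Qed.
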